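(* Let $n\ge 1$ and let $\Lambda$ be a noncrossing set partition of $[n]=\{1,\dots,n\}$ with $k$ blocks. Then $\Lambda^+$ is a noncrossing set partition of $[n]$ with $n+1-k$ blocks.
   Context: A set partition is a set of nonempty, pairwise disjoint finite sets of integers (its blocks); it is a partition of $\mathcal X$ if the union of its blocks is $\mathcal X$. A pair $(i,j)$ is an arc of a set partition $\Lambda$ if $i<j$, $i$ and $j$ lie in the same block, and $j$ is the least element of that block greater than $i$; $\mathrm{Arc}(\Lambda)$ denotes the set of arcs (a partition is determined by its ground set and its arcs). $\Lambda$ is noncrossing if there are no two arcs $(i,k),(j,l)\in\mathrm{Arc}(\Lambda)$ with $i<j<k<l$. For a finite set $\mathcal X\subset\mathbb Z$ and a partition $\Lambda$ of $\mathcal X$, $\Lambda^+$ is the partition of $\mathcal X$ with arc set $(\mathrm{Arc}(\Lambda)\setminus\mathcal S)\cup\mathcal T$, where $\mathcal S=\{(i,i+1):i\in\mathbb Z\}$ and $\mathcal T$ is the set of pairs $(i,i+1)\in\mathcal X\times\mathcal X$ such that $i$ is the maximal element of its block of $\Lambda$ and $i+1$ is the minimal element of its block of $\Lambda$. *)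

(* Defs.v *)
(* Integers 1..n are encoded as the elements i of 'I_n.+1 with 0 < i
   (value of the ordinal = the integer itself). *)
From mathcomp Require Import all_boot.
Set Implicit Arguments. Unset Strict Implicit. Unset Printing Implicit Defensive.

Definition ground (n : nat) : {set 'I_n.+1} := [set i : 'I_n.+1 | 0 < val i].

Definition part_arc (n : nat) (P : {set {set 'I_n.+1}}) (i j : 'I_n.+1) : bool :=
  [exists B in P, [&& i \in B, j \in B, val i < val j &
     [forall m in B, (val i < val m) ==> (val j <= val m)]]].

Definition noncrossing (n : nat) (P : {set {set 'I_n.+1}}) : bool :=
  ~~ [exists i, exists j, exists k, exists l,
       [&& part_arc P i k, part_arc P j l, val i < val j, val j < val k & val k < val l]].

Definition is_block_max (n : nat) (P : {set {set 'I_n.+1}}) (i : 'I_n.+1) : bool :=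
  [exists B in P, (i \in B) && [forall m in B, val m <= val i]].
Definition is_block_min (n : nat) (P : {set {set 'I_n.+1}}) (i : 'I_n.+1) : bool :=
  [exists B in P, (i \in B) && [forall m in B, val i <= val m]].

(* membership in (Arc(P) \ S) ∪ T, where X = ground n *)
Definition plus_arc (n : nat) (P : {set {set 'I_n.+1}}) (i j : 'I_n.+1) : bool :=
  (part_arc P i j && (val j != (val i).+1))
  || [&& i \in ground n, j \in ground n, val j == (val i).+1,
         is_block_max P i & is_block_min P j].

(* Main.v *)
Require Import Defs.
From mathcomp Require Import all_boot.
Set Implicit Arguments. Unset Strict Implicit. Unset Printing Implicit Defensive.

Section Part.
Variables (n : nat) (P : {set {set 'I_n.+1}}).
Hypothesis HP : partition P (ground n).

Lemma triv_P : trivIset P. Proof. by case/and3P: HP. Qed.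
Lemma cov_P : cover P = ground n. Proof. exact: cover_partition. Qed.
Lemma nz_P : set0 \notin P. Proof. by case/and3P: HP. Qed.

Lemma inB_ground B x : B \in P -> x \in B -> x \in ground n.
Proof. by move=> BP xB; rewrite -cov_P; apply/bigcupP; exists B. Qed.

Lemma same_block B B' x : B \in P -> B' \in P -> x \in B -> x \in B' -> B = B'.
Proof.
move=> BP B'P xB xB'.
by rewrite -(def_pblock triv_P BP xB) (def_pblock triv_P B'P xB').
Qed.

Lemma arcP i j : reflect (exists2 B, B \in P & [/\ i \in B, j \in B, val i < val j &
     forall m, m \in B -> val i < val m -> val j <= val m]) (part_arc P i j).
Proof.
apply: (iffP existsP) => [[B /andP[BP /and4P[iB jB ij /forall_inP H]]]|[B BP [iB jB ij H]]].
  by exists B => //; split => // m mB im; exact: (implyP (H m mB)).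
exists B; rewrite BP iB jB ij /=; apply/forall_inP => m mB; apply/implyP; exact: H.
Qed.

Lemma arc_lt i j : part_arc P i j -> val i < val j.
Proof. by case/arcP => B _ []. Qed.

Lemma arc_ground i j : part_arc P i j -> (i \in ground n) && (j \in ground n).
Proof. by case/arcP => B BP [iB jB _ _]; rewrite !(inB_ground BP). Qed.

Lemma arc_out i j j' : part_arc P i j -> part_arc P i j' -> j = j'.
Proof.
case/arcP => B BP [iB jB ij H]; case/arcP => B' B'P [iB' jB' ij' H'].
have eB := same_block BP B'P iB iB'; subst B'.
apply: val_inj; apply/eqP; rewrite eqn_leq (H _ jB' ij') (H' _ jB ij) //.
Qed.

Lemma arc_in i i' j : part_arc P i j -> part_arc P i' j -> i = i'.
Proof.
case/arcP => B BP [iB jB ij H]; case/arcP => B' B'P [iB' jB' ij' H'].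
have eB := same_block BP B'P jB jB'; subst B'.
apply: val_inj; case: (ltngtP (val i) (val i')) => // h.
  by have := H _ iB' h; rewrite leqNgt ij'.
by have := H' _ iB h; rewrite leqNgt ij.
Qed.

Lemma maxP i : is_block_max P i = (i \in ground n) && ~~ [exists j, part_arc P i j].
Proof.
apply/idP/idP.
  case/exists_inP => B BP /andP[iB /forall_inP H]; rewrite (inB_ground BP iB) /=.
  apply/existsP => -[j /arcP [B' B'P [iB' jB' ij _]]].
  have eB := same_block BP B'P iB iB'; subst B'.
  by have := H j jB'; rewrite leqNgt ij.
case/andP => ig /existsPn H.
have ic : i \in cover P by rewrite cov_P.
apply/exists_inP; exists (pblock P i); first exact: pblock_mem.
rewrite mem_pblock ic /=; apply/forall_inP => m mB; rewrite leqNgt; apply/negP => im.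
pose Q := fun x : 'I_n.+1 => (x \in pblock P i) && (val i < val x).
have Qm : Q m by rewrite /Q mB im.
case: (arg_minnP val Qm) => j /andP[jB ij] Hj.
apply: (negP (H j)); apply/arcP; exists (pblock P i); first exact: pblock_mem.
split => //; first by rewrite mem_pblock.
by move=> m' m'B im'; apply: Hj; rewrite /Q m'B.
Qed.

Lemma minP j : is_block_min P j = (j \in ground n) && ~~ [exists i, part_arc P i j].
Proof.
apply/idP/idP.
  case/exists_inP => B BP /andP[jB /forall_inP H]; rewrite (inB_ground BP jB) /=.
  apply/existsP => -[i /arcP [B' B'P [iB' jB' ij _]]].
  have eB := same_block BP B'P jB jB'; subst B'.
  by have := H i iB'; rewrite leqNgt ij.
case/andP => jg /existsPn H.
have jc : j \in cover P by rewrite cov_P.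
apply/exists_inP; exists (pblock P j); first exact: pblock_mem.
rewrite mem_pblock jc /=; apply/forall_inP => m mB; rewrite leqNgt; apply/negP => mj.
pose Q := fun x : 'I_n.+1 => (x \in pblock P j) && (val x < val j).
have Qm : Q m by rewrite /Q mB mj.
case: (arg_maxnP val Qm) => i /andP[iB ij] Hi.
apply: (negP (H i)); apply/arcP; exists (pblock P j); first exact: pblock_mem.
split => //; first by rewrite mem_pblock.
move=> m' m'B im'; rewrite leqNgt; apply/negP => m'j.
have := Hi m' (introT andP (conj m'B m'j)).
by move=> /=; rewrite leqNgt im'.
Qed.


Lemma count_max : #|P| = #|[set i | is_block_max P i]|.
Proof.
have Hinj : {in [set i | is_block_max P i] &, injective (pblock P)}.
  move=> i j; rewrite !inE => /exists_inP[B BP /andP[iB /forall_inP Hi]].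
  move=> /exists_inP[B' B'P /andP[jB /forall_inP Hj]].
  rewrite (def_pblock triv_P BP iB) (def_pblock triv_P B'P jB) => eB; subst B'.
  by apply: val_inj; apply/eqP; rewrite eqn_leq Hi // Hj.
suff eP : P = [set pblock P x | x in [set i | is_block_max P i]].
  by rewrite {1}eP (card_in_imset Hinj).
apply/setP => B; apply/idP/idP; last first.
  case/imsetP => i; rewrite inE => /exists_inP[B' B'P /andP[iB _]] ->.
  by rewrite (def_pblock triv_P B'P iB).
move=> BP.
have : B != set0 by apply: contraNneq nz_P => <-.
case/set0Pn => x xB.
case: (arg_maxnP val xB) => m mB Hm.
apply/imsetP; exists m; last by rewrite (def_pblock triv_P BP mB).
rewrite inE; apply/exists_inP; exists B => //; apply/andP; split => //.
by apply/forall_inP => y yB; exact: Hm.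
Qed.

Lemma count_min : #|P| = #|[set i | is_block_min P i]|.
Proof.
have Hinj : {in [set i | is_block_min P i] &, injective (pblock P)}.
  move=> i j; rewrite !inE => /exists_inP[B BP /andP[iB /forall_inP Hi]].
  move=> /exists_inP[B' B'P /andP[jB /forall_inP Hj]].
  rewrite (def_pblock triv_P BP iB) (def_pblock triv_P B'P jB) => eB; subst B'.
  by apply: val_inj; apply/eqP; rewrite eqn_leq Hi // Hj.
suff eP : P = [set pblock P x | x in [set i | is_block_min P i]].
  by rewrite {1}eP (card_in_imset Hinj).
apply/setP => B; apply/idP/idP; last first.
  case/imsetP => i; rewrite inE => /exists_inP[B' B'P /andP[iB _]] ->.
  by rewrite (def_pblock triv_P B'P iB).
move=> BP.
have : B != set0 by apply: contraNneq nz_P => <-.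
case/set0Pn => x xB.
case: (arg_minnP val xB) => m mB Hm.
apply/imsetP; exists m; last by rewrite (def_pblock triv_P BP mB).
rewrite inE; apply/exists_inP; exists B => //; apply/andP; split => //.
by apply/forall_inP => y yB; exact: Hm.
Qed.

End Part.

Section Build.
Variables (n : nat) (A : rel 'I_n.+1).
Hypothesis H1 : forall i j, A i j -> val i < val j.
Hypothesis H2 : forall i j, A i j -> (i \in ground n) && (j \in ground n).
Hypothesis H3 : forall i j j', A i j -> A i j' -> j = j'.
Hypothesis H4 : forall i i' j, A i j -> A i' j -> i = i'.

Local Notation fwd := (connect A).

Lemma path_le x p : path A x p -> val x <= val (last x p).
Proof.
elim: p x => [|y p IH] x //= /andP[xy py].
by apply: leq_trans (IH _ py); apply: ltnW; apply: H1.
Qed.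

Lemma fwd_le x y : fwd x y -> val x <= val y.
Proof. by case/connectP => p pp ->; apply: path_le. Qed.

Lemma fwd_step x y : fwd x y -> x != y -> exists2 s, A x s & fwd s y.
Proof.
case/connectP => [[|s p]] /= pp -> ; first by rewrite eqxx.
case/andP: pp => xs sp _; exists s => //; apply/connectP; by exists p.
Qed.

Lemma fwd_laststep x z w : fwd x z -> A w z -> x != z -> fwd x w.
Proof.
case/connectP => p; elim/last_ind: p => [|p y _] pp ->; first by rewrite eqxx.
rewrite rcons_path in pp; case/andP: pp => pp ly; rewrite last_rcons => Awy _.
rewrite -(H4 ly Awy); apply/connectP; by exists p.
Qed.

Definition E x y := fwd x y || fwd y x.

Lemma E_fwd_step x y w : E x y -> A y w -> E x w.
Proof.
rewrite /E => /orP[xy|yx] yw.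
  by rewrite (connect_trans xy (connect1 yw)).
case: (eqVneq y x) => [eyx|nyx].
  by subst y; rewrite (connect1 yw).
case: (fwd_step yx nyx) => s ys sx; by rewrite (H3 yw ys) sx orbT.
Qed.

Lemma E_bwd_step x y w : E x y -> A w y -> E x w.
Proof.
rewrite /E => /orP[xy|yx] wy; last first.
  by rewrite (connect_trans (connect1 wy) yx) orbT.
case: (eqVneq x y) => [exy|nxy].
  by subst y; rewrite (connect1 wy) orbT.
by rewrite (fwd_laststep xy wy nxy).
Qed.

Lemma E_fwd x y z : E x y -> fwd y z -> E x z.
Proof.
move=> Exy /connectP[p pp ->]; elim: p y Exy pp => [|w p IH] y Exy //= /andP[yw wp].
exact: (IH w (E_fwd_step Exy yw) wp).
Qed.

Lemma E_bwd x y z : E x y -> fwd z y -> E x z.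
Proof.
move=> Exy /connectP[p pp ey]; elim: p z pp ey => [|w p IH] z /=; first by move=> _ <-.
case/andP => zw wp ey; exact: (E_bwd_step (IH w wp ey) zw).
Qed.

Lemma E_sym x y : E x y = E y x. Proof. by rewrite /E orbC. Qed.

Lemma E_trans x y z : E x y -> E y z -> E x z.
Proof. by move=> Exy /orP[yz|zy]; [apply: E_fwd Exy yz | apply: E_bwd Exy zy]. Qed.

Lemma E_equiv : equivalence_rel E.
Proof.
move=> x y z; split; first by rewrite /E connect0.
move=> Exy; apply/idP/idP => [Exz|Eyz]; last exact: E_trans Exy Eyz.
by apply: E_trans Exz; rewrite E_sym.
Qed.

Definition Lp := equivalence_partition E (ground n).

Lemma Lp_part : partition Lp (ground n).
Proof. by apply: equivalence_partitionP => x y z _ _ _; apply: E_equiv. Qed.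

Lemma Lp_arc i j : part_arc Lp i j = A i j.
Proof.
apply/idP/idP.
  case/existsP => B /andP[/imsetP[x xg ->] /and4P[iB jB ij /forall_inP H]].
  rewrite !inE in iB jB; case/andP: iB => ig Exi; case/andP: jB => jg Exj.
  have Eij : E i j by apply: E_trans Exj; rewrite E_sym.
  have fij : fwd i j.
    case/orP: Eij => // fji; have := fwd_le fji; by rewrite leqNgt ij.
  have nij : i != j by apply: contraTneq ij => ->; rewrite ltnn.
  case: (fwd_step fij nij) => s is_ sj.
  have /andP[_ sg] := H2 is_.
  have sB : s \in [set y in ground n | E x y].
    by rewrite inE sg (E_fwd_step Exi is_).
  have js := implyP (H s sB) (H1 is_).
  have sj' := fwd_le sj.
  have -> : j = s by apply: val_inj; apply/eqP; rewrite eqn_leq js sj'.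
  exact: is_.
move=> Aij; have /andP[ig jg] := H2 Aij.
apply/existsP; exists [set y in ground n | E i y].
rewrite (imset_f (fun x => [set y in ground n | E x y]) ig) /=.
rewrite [i \in _]inE [j \in _]inE ig jg /E connect0 (connect1 Aij) (H1 Aij) /=.
apply/forall_inP => m; rewrite inE => /andP[mg /orP[fim|fmi]]; apply/implyP => im.
  have nim : i != m by apply: contraTneq im => ->; rewrite ltnn.
  case: (fwd_step fim nim) => s is_ sm; rewrite (H3 Aij is_); exact: fwd_le.
by have := fwd_le fmi; rewrite leqNgt im.
Qed.

Lemma Lp_exists : exists L : {set {set 'I_n.+1}},
  partition L (ground n) /\ forall i j, part_arc L i j = A i j.
Proof. exists Lp; split; [exact: Lp_part | exact: Lp_arc]. Qed.

End Build.

Section Main.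
Variables (n : nat) (L : {set {set 'I_n.+1}}).
Hypothesis HL : partition L (ground n).
Hypothesis NC : noncrossing L.

Lemma plusE i j : plus_arc L i j =
  (part_arc L i j && (val j != (val i).+1))
  || [&& i \in ground n, j \in ground n, val j == (val i).+1,
         is_block_max L i & is_block_min L j].
Proof. by []. Qed.

Lemma nc_contra a b c d : part_arc L a c -> part_arc L b d ->
  val a < val b -> val b < val c -> val c < val d -> False.
Proof.
move=> ac bd ab bc cd; move/negP: NC; apply.
apply/existsP; exists a; apply/existsP; exists b; apply/existsP; exists c;
apply/existsP; exists d; by rewrite ac bd ab bc cd.
Qed.

Lemma noarc_max i j : part_arc L i j -> is_block_max L i -> False.
Proof. by move=> ij; rewrite (maxP HL) => /andP[_ /existsP]; apply; exists j. Qed.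

Lemma noarc_min i j : part_arc L i j -> is_block_min L j -> False.
Proof. by move=> ij; rewrite (minP HL) => /andP[_ /existsP]; apply; exists i. Qed.

Lemma A1 i j : plus_arc L i j -> val i < val j.
Proof. by case/orP => [/andP[/arc_lt] | /and5P[_ _ /eqP -> _ _]]. Qed.

Lemma A2 i j : plus_arc L i j -> (i \in ground n) && (j \in ground n).
Proof. by case/orP => [/andP[/(arc_ground HL)] | /and5P[-> -> _ _ _]]. Qed.

Lemma A3 i j j' : plus_arc L i j -> plus_arc L i j' -> j = j'.
Proof.
case/orP => [/andP[ij _] | /and5P[_ _ /eqP ej mi _]];
case/orP => [/andP[ij' _] | /and5P[_ _ /eqP ej' mi' _]].
- exact (arc_out HL ij ij').
- by case: (noarc_max ij mi').
- by case: (noarc_max ij' mi).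
- by apply: val_inj; rewrite ej ej'.
Qed.

Lemma A4 i i' j : plus_arc L i j -> plus_arc L i' j -> i = i'.
Proof.
case/orP => [/andP[ij _] | /and5P[_ _ /eqP ej _ mj]];
case/orP => [/andP[ij' _] | /and5P[_ _ /eqP ej' _ mj']].
- exact (arc_in HL ij ij').
- by case: (noarc_min ij mj').
- by case: (noarc_min ij' mj).
- by apply: val_inj; apply/eqP; rewrite -eqSS -ej ej'.
Qed.

Lemma key i : i \in ground n ->
  [exists j, plus_arc L i j] = (val i < n) && is_block_min L (inord (val i).+1).
Proof.
move=> ig.
have vi' : val i < n -> val (inord (val i).+1 : 'I_n.+1) = (val i).+1.
  by move=> h; rewrite /= inordK // ltnS.
apply/idP/idP.
  case/existsP => j /orP[/andP[ij nj] | /and5P[_ jg /eqP ej _ mj]].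
    have lij := arc_lt ij.
    have iln : val i < n by apply: (leq_trans lij); rewrite -ltnS ltn_ord.
    rewrite iln /= (minP HL) inE (vi' iln) ltn0Sn /=.
    apply/existsP => -[h hi'].
    have hlt := arc_lt hi'; rewrite (vi' iln) ltnS in hlt.
    case: (ltngtP (val h) (val i)) hlt => // [hi | hi] _.
      apply: (nc_contra hi' ij hi); rewrite (vi' iln) //.
      by rewrite ltn_neqAle eq_sym nj lij.
    have ehi : h = i by apply: val_inj.
    rewrite ehi in hi'; have ej := arc_out HL ij hi'; move: nj; rewrite ej (vi' iln).
    by rewrite eqxx.
  have iln : val i < n by rewrite -ltnS -ej ltn_ord.
  rewrite iln /=; suff -> : inord (val i).+1 = j by [].
  by apply: val_inj; rewrite (vi' iln) ej.
case/andP => iln mi'.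
case: (boolP (is_block_max L i)) => Mi.
  apply/existsP; exists (inord (val i).+1); apply/orP; right.
  by rewrite ig (vi' iln) eqxx Mi mi' inE (vi' iln).
move: Mi; rewrite (maxP HL) ig /= negbK => /existsP[j ij].
apply/existsP; exists j; apply/orP; left; rewrite ij /=.
apply/negP => /eqP ej.
have ej' : j = inord (val i).+1 by apply: val_inj; rewrite (vi' iln).
subst j; exact: noarc_min ij mi'.
Qed.

End Main.

Lemma card_ground n : #|ground n| = n.
Proof.
have -> : ground n = [set~ ord0].
  by apply/setP => i; rewrite !inE -lt0n.
by rewrite cardsC1 card_ord.
Qed.

Theorem proposition2p4 (n k : nat) (L : {set {set 'I_n.+1}}) :
  1 <= n -> finset.partition L (ground n) -> noncrossing L -> #|L| = k ->
  exists Lp : {set {set 'I_n.+1}},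
    [/\ finset.partition Lp (ground n),
        (forall i j, part_arc Lp i j = plus_arc L i j),
        noncrossing Lp &
        #|Lp| = n.+1 - k].
Proof.
move=> n1 HL NC cL.
have [Lp [HLp Harc]] := Lp_exists (@A1 n L) (A2 HL) (A3 HL) (A4 HL).
exists Lp; split => //.
  apply/negP => /existsP[a /existsP[b /existsP[c /existsP[d]]]].
  rewrite !Harc => /and5P[ac bd ab bc cd].
  case/orP: ac => [/andP[ac _] | /and5P[_ _ /eqP ec _ _]]; last first.
    by move: bc; rewrite ec ltnS leqNgt ab.
  case/orP: bd => [/andP[bd _] | /and5P[_ _ /eqP ed _ _]]; last first.
    by move: cd; rewrite ed ltnS leqNgt bc.
  exact (nc_contra NC ac bd ab bc cd).
rewrite (count_max HLp).
set Mins := [set j | is_block_min L j].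
have cM : #|Mins| = k by rewrite -(count_min HL) cL.
have Msub : Mins \subset ground n.
  by apply/subsetP => j; rewrite inE (minP HL) => /andP[].
have cN : #|ground n :\: Mins| = n - k.
  by rewrite cardsD (setIidPr Msub) cM card_ground.
have kn : k <= n by rewrite -cM; apply: leq_trans (subset_leq_card Msub) _; rewrite card_ground.
pose f := fun j : 'I_n.+1 => (inord (val j).-1 : 'I_n.+1).
have fv j : val (f j) = (val j).-1.
  by rewrite /f /= inordK // (leq_ltn_trans (leq_pred _) (ltn_ord j)).
have min1 j : val j = 1 -> j \in Mins.
  move=> j1; rewrite inE (minP HL) inE j1 /=.
  apply/existsP => -[h hj]; have /andP[hg _] := arc_ground HL hj.
  by have := arc_lt hj; rewrite j1 ltnS leqNgt; rewrite inE in hg; rewrite hg.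
have eS : [set i | is_block_max Lp i] = ord_max |: (f @: (ground n :\: Mins)).
  apply/setP => i; rewrite inE (maxP HLp) [i \in _ |: _]inE.
  have -> : [exists j, part_arc Lp i j] = [exists j, plus_arc L i j].
    by apply: eq_existsb => j; rewrite Harc.
  apply/idP/idP.
    case/andP => ig; rewrite (key HL NC ig) negb_and -leqNgt => H.
    case: (ltngtP (val i) n) => [iln|nli|ein].
    - idtac.
    rewrite leqNgt iln /= in H.
    apply/orP; right; apply/imsetP; exists (inord (val i).+1).
      by rewrite !inE H /= inordK // ltnS ltnW.
    by apply: val_inj; rewrite fv /= inordK // ltnS ltnW.
    - by have := ltn_ord i; rewrite ltnS leqNgt nli.
    - by apply/orP; left; rewrite inE; apply/eqP; apply: val_inj; rewrite /= ein.
  case/orP => [/set1P -> | /imsetP[j]].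
    rewrite inE /= n1 /=; rewrite (key HL NC); last by rewrite inE.
    by rewrite ltnn.
  rewrite !inE => /andP[nm jg] ->.
  have j2 : 1 < val j.
    rewrite ltn_neqAle eq_sym jg andbT; apply/eqP => j1.
    by move: nm; have := min1 _ j1; rewrite inE => ->.
  have fg : f j \in ground n by rewrite inE fv -ltnS prednK // ltnW.
  have fg0 := fg; rewrite inE in fg0; rewrite fg0 /= (key HL NC fg) negb_and fv.
  have -> : (inord (val j).-1.+1 : 'I_n.+1) = j.
    by apply: val_inj; rewrite /= prednK ?inordK //.
  by rewrite nm orbT.
rewrite eS cardsU1 (card_in_imset _).
  rewrite cN; case: imsetP => [[j]|_]; last by rewrite add1n subSn.
  rewrite !inE => /andP[_ jg] /(congr1 val); rewrite fv /= => e.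
  have lj : nat_of_ord j < n.+1 := ltn_ord j; have jg' : 0 < nat_of_ord j := jg.
  move: (nat_of_ord j) lj jg' e => [|v] //= lj _ ev; by rewrite -ev ltnn in lj.
move=> x y; rewrite !inE => /andP[_ xg] /andP[_ yg] /(congr1 val); rewrite !fv => e.
apply: val_inj; by rewrite -(prednK xg) -(prednK yg) e.
Qed.
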